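(* Let $\mathcal{K}$ be a finite-dimensional complex Hilbert space with inner product $\langle\cdot,\cdot\rangle$, let $S$ be a strictly positive operator on $\mathcal{K}$, let $\mathcal{K}_0\subset\mathcal{K}$ be a linear subspace with basis $\{e_i\}_{i=1}^d$, and define $d\times d$ matrices $K^{(1)}_{ij}=\langle e_i,Se_j\rangle$, $K^{(2)}_{ij}=\langle e_i,e_j\rangle$, $K^{(3)}_{ij}=\langle e_i,S^{-1}e_j\rangle$. Then the following are equivalent: (i) $S(\mathcal{K}_0)=\mathcal{K}_0$; (ii) $(K^{(3)})^{-1}=(K^{(2)})^{-1}K^{(1)}(K^{(2)})^{-1}$. *)

(* Defs.v *)
From HB Require Import structures.
From mathcomp Require Import all_boot all_order all_algebra.
From mathcomp Require Import complex reals.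
Set Implicit Arguments. Unset Strict Implicit. Unset Printing Implicit Defensive.
Import Order.TTheory GRing.Theory Num.Theory.
Local Open Scope ring_scope.

Definition adjmx (C : numClosedFieldType) m n (A : 'M[C]_(m, n)) : 'M[C]_(n, m) :=
  (map_mx Num.conj A)^T.

(* Standard inner product on C^n (column vectors), conjugate-linear in the
   first argument: <x, y> = sum_k conj(x_k) y_k. *)
Definition ip (C : numClosedFieldType) n (x y : 'cV[C]_n) : C :=
  (adjmx x *m y) 0 0.

Definition strictly_positive (C : numClosedFieldType) n (S : 'M[C]_n) : Prop :=
  adjmx S = S /\ (forall x : 'cV[C]_n, x != 0 -> 0 < ip x (S *m x)).

(* Linear independence of the columns of E (the family e_1..e_d). *)
Definition lin_indep (C : numClosedFieldType) n d (E : 'M[C]_(n, d)) : Prop :=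
  forall c : 'cV[C]_d, E *m c = 0 -> c = 0.

Definition in_span (C : numClosedFieldType) n d (E : 'M[C]_(n, d)) (x : 'cV[C]_n) : Prop :=
  exists c : 'cV[C]_d, x = E *m c.

Definition gram (C : numClosedFieldType) n d (E : 'M[C]_(n, d)) (A : 'M[C]_n) : 'M[C]_d :=
  \matrix_(i < d, j < d) ip (col i E) (A *m col j E).

(* Main.v *)
Require Import Defs.
From HB Require Import structures.
From mathcomp Require Import all_boot all_order all_algebra.
From mathcomp Require Import complex reals.
Import Order.TTheory GRing.Theory Num.Theory.
Local Open Scope ring_scope.

Section Aux.
Variable C : numClosedFieldType.

Lemma adjmxM m n p (A : 'M[C]_(m, n)) (B : 'M[C]_(n, p)) :
  adjmx (A *m B) = adjmx B *m adjmx A.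
Proof. by rewrite /adjmx map_mxM trmx_mul. Qed.

Lemma adjmxK m n (A : 'M[C]_(m, n)) : adjmx (adjmx A) = A.
Proof. by apply/matrixP => i j; rewrite !mxE conjCK. Qed.

Lemma adjmxB m n (A B : 'M[C]_(m, n)) : adjmx (A - B) = adjmx A - adjmx B.
Proof. by apply/matrixP => i j; rewrite !mxE rmorphB. Qed.

Lemma adjmx_inv n (A : 'M[C]_n) : adjmx (invmx A) = invmx (adjmx A).
Proof. by rewrite /adjmx map_invmx trmx_inv. Qed.

Lemma col_mulmx m n p (A : 'M[C]_(m, n)) (B : 'M[C]_(n, p)) j :
  col j (A *m B) = A *m col j B.
Proof. by apply/matrixP => i k; rewrite !mxE; apply: eq_bigr => l _; rewrite !mxE. Qed.

Lemma rowcol m n p (X : 'M[C]_(m, n)) (Y : 'M[C]_(n, p)) i j :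
  (row i X *m col j Y) 0 0 = (X *m Y) i j.
Proof. by rewrite !mxE; apply: eq_bigr => l _; rewrite !mxE. Qed.

Lemma adj_col m n (E : 'M[C]_(m, n)) i : adjmx (col i E) = row i (adjmx E).
Proof. by apply/matrixP => a b; rewrite !mxE. Qed.

Lemma gramE n d (E : 'M[C]_(n, d)) (A : 'M[C]_n) :
  gram E A = adjmx E *m A *m E.
Proof.
apply/matrixP => i j; rewrite mxE /ip adj_col -col_mulmx rowcol.
by rewrite mulmxA.
Qed.

Lemma unit_of_inj n (A : 'M[C]_n) :
  (forall c : 'cV[C]_n, A *m c = 0 -> c = 0) -> A \in unitmx.
Proof.
move=> h; rewrite unitmxE unitfE -det_tr; apply/negP => /det0P [v vnz].
move=> /(congr1 trmx); rewrite trmx_mul trmx0 trmxK => /h /(congr1 trmx).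
by rewrite trmxK trmx0 => v0; move: vnz; rewrite v0 eqxx.
Qed.

Lemma ip_gt0 n (x : 'cV[C]_n) : x != 0 -> 0 < ip x x.
Proof.
move=> xnz.
have ge0 : forall k : 'I_n, true -> 0 <= (adjmx x) 0 k * x k 0.
  by move=> k _; rewrite !mxE mulrC mul_conjC_ge0.
rewrite /ip lt_def; apply/andP; split; last first.
  by rewrite mxE; apply: sumr_ge0 => k _; apply: ge0.
apply/negP => /eqP; rewrite mxE => h0.
suff x0 : x = 0 by rewrite x0 eqxx in xnz.
apply/matrixP => k l.
rewrite (ord1 l) !mxE.
have := psumr_eq0P ge0 h0 (isT : true) ; rewrite ?mxE => hk.
by have := hk k; rewrite !mxE mulrC => /eqP; rewrite mul_conjC_eq0 => /eqP.
Qed.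

Lemma gram_unit n d (E : 'M[C]_(n, d)) (Q : 'M[C]_n) :
  (forall x, x != 0 -> 0 < ip x (Q *m x)) -> lin_indep E ->
  adjmx E *m Q *m E \in unitmx.
Proof.
move=> HQ HE; apply: unit_of_inj => c h; apply: HE.
apply/eqP; apply/negP => /negP nz; have := HQ _ nz.
have -> : ip (E *m c) (Q *m (E *m c)) = (adjmx c *m (adjmx E *m Q *m E *m c)) 0 0.
  by rewrite /ip adjmxM !mulmxA.
by rewrite h mulmx0 mxE ltxx.
Qed.

Lemma expand m n (F G : 'M[C]_(m, n)) (S : 'M[C]_m) :
  adjmx (F - G) *m S *m (F - G) =
  adjmx F *m S *m F - adjmx F *m S *m G - (adjmx G *m S *m F - adjmx G *m S *m G).
Proof. by rewrite adjmxB mulmxBl mulmxBl !mulmxBr. Qed.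

Lemma inv_uniq n (A B : 'M[C]_n) : A \in unitmx -> A *m B = 1%:M -> invmx A = B.
Proof. by move=> Au h; rewrite -[B](mulKmx Au) h mulmx1. Qed.

End Aux.

Theorem lemma10 (R : realType) (n d : nat) (S : 'M[R[i]]_n) (E : 'M[R[i]]_(n, d)) :
  strictly_positive S ->
  lin_indep E ->
  let K1 := gram E S in
  let K2 := gram E 1%:M in
  let K3 := gram E (invmx S) in
  (forall y : 'cV[R[i]]_n,
     in_span E y <-> exists x, in_span E x /\ y = S *m x)
  <-> invmx K3 = invmx K2 *m K1 *m invmx K2.
Proof.
move=> [Sadj Spos] HE K1 K2 K3.
have S_inj : forall x : 'cV_n, S *m x = 0 -> x = 0.
  move=> x h; apply/eqP; apply/negP => /negP nz; have := Spos _ nz.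
  by rewrite h /ip mulmx0 mxE ltxx.
have Su : S \in unitmx := @unit_of_inj _ _ S S_inj.
set Si := invmx S.
have Siadj : adjmx Si = Si by rewrite /Si adjmx_inv Sadj.
have Sipos : forall x, x != 0 -> 0 < ip x (Si *m x).
  move=> x nz; have ex : x = S *m (Si *m x) by rewrite mulmxA mulmxV // mul1mx.
  have ynz : Si *m x != 0.
    by apply/negP => /eqP h; move: nz; rewrite ex h mulmx0 eqxx.
  have := Spos _ ynz; congr (0 < _).
  by symmetry; rewrite {1}ex /ip adjmxM Sadj !mulmxA.
have eK1 : K1 = adjmx E *m S *m E by rewrite /K1 gramE.
have eK2 : K2 = adjmx E *m E by rewrite /K2 gramE mulmx1.
have eK3 : K3 = adjmx E *m Si *m E by rewrite /K3 gramE.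
have K2u : K2 \in unitmx.
  rewrite /K2 gramE; apply: gram_unit => // x nz; rewrite mul1mx; exact: ip_gt0.
have K3u : K3 \in unitmx by rewrite eK3; apply: gram_unit.
clearbody K1 K2 K3.
set K2i := invmx K2; set K3i := invmx K3.
have K2adj : adjmx K2 = K2 by rewrite eK2 adjmxM adjmxK.
have K2iadj : adjmx K2i = K2i by rewrite /K2i adjmx_inv K2adj.
have SSi : S *m Si = 1%:M by rewrite mulmxV.
have SiS : Si *m S = 1%:M by rewrite mulVmx.
split.
- move=> H.
  have col_in : forall j, exists c, S *m col j E = E *m c.
    move=> j; apply/(H _).2; exists (col j E); split => //.
    by exists (col j 1%:M); rewrite -col_mulmx mulmx1.
  set M := K2i *m K1.
  have SEM : S *m E = E *m M.
    apply/matrixP => a b; have [c hc] := col_in b.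
    have : col b (S *m E) = col b (E *m M).
      rewrite !col_mulmx hc eK1 col_mulmx -(mulmxA (adjmx E)) hc.
      rewrite !mulmxA -(mulmxA (E *m K2i) (adjmx E) E) -eK2 -(mulmxA E K2i K2).
      by rewrite mulVmx // mulmx1.
    by move=> /(congr1 (fun v : 'cV_n => v a 0)); rewrite !mxE.
  have K3M : K3 *m M = K2.
    by rewrite eK3 -mulmxA -SEM !mulmxA -(mulmxA _ Si) SiS mulmx1 eK2.
  have -> : K3i = M *m K2i.
    apply: inv_uniq => //; rewrite (mulmxA K3 M K2i) K3M mulmxV //.
  by rewrite /M.
- move=> HK.
  set F := E *m K2i; set G := Si *m E *m K3i; set D := F - G.
  have aF : adjmx F = K2i *m adjmx E by rewrite /F adjmxM K2iadj.
  have aG : adjmx G = adjmx K3i *m adjmx E *m Si by rewrite /G !adjmxM Siadj mulmxA.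
  have FSF : adjmx F *m S *m F = K3i.
    by rewrite aF /F HK eK1 !mulmxA.
  have FSG : adjmx F *m S *m G = K3i.
    rewrite aF /G !mulmxA -(mulmxA _ S Si) SSi mulmx1 -(mulmxA K2i) -eK2.
    by rewrite mulVmx // mul1mx.
  have GSF : adjmx G *m S *m F = adjmx K3i.
    rewrite aG /F !mulmxA -(mulmxA _ Si S) SiS mulmx1 -(mulmxA (adjmx K3i)) -eK2.
    by rewrite -mulmxA mulmxV // mulmx1.
  have GSG : adjmx G *m S *m G = adjmx K3i.
    rewrite aG /G !mulmxA -(mulmxA _ Si S) SiS mulmx1.
    rewrite -(mulmxA (adjmx K3i) (adjmx E) Si) -(mulmxA _ _ E) -eK3.
    by rewrite -mulmxA mulmxV // mulmx1.
  have eF : F = E *m K2i by [].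
  have eG : G = Si *m E *m K3i by [].
  clearbody F G.
  have key : adjmx D *m S *m D = 0.
    by rewrite /D (@expand _ _ _ F G S) FSF FSG GSF GSG !subrr.
  have D0 : D = 0.
    have colD : forall j, col j D = 0.
      move=> j; apply/eqP; apply/negP => /negP nz; have := Spos _ nz.
      rewrite /ip adj_col -col_mulmx rowcol mulmxA key mxE ltxx //.
    by apply/matrixP => a b; have := congr1 (fun v : 'cV_n => v a 0) (colD b); rewrite !mxE.
  have FG : F = G by apply: subr0_eq.
  have SEK : S *m E *m K2i = E *m K3i.
    by rewrite -mulmxA -eF FG eG !mulmxA SSi mul1mx.
  move=> y; split.
  + move=> [c ->]; exists (E *m (K2i *m K3 *m c)); split; first by exists (K2i *m K3 *m c).
    by rewrite !mulmxA SEK -(mulmxA E K3i) mulVmx // mulmx1.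
  + move=> [x [[c ->] ->]]; exists (K3i *m K2 *m c).
    rewrite !mulmxA -SEK -(mulmxA _ K2i) mulVmx // mulmx1 //.
Qed.
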